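(* Let $P$ be a finite $(3+1)$-free poset and $T$ a $P$-array. Then $T$ is a $P$-tableau if and only if for each pair of adjacent columns $T_i,T_{i+1}$ of $T$, the ladder decomposition $L_m,\dots,L_1$ of $(T_i,T_{i+1})$ satisfies $\sum_{j=1}^k|L_j\cap T_i|\ge\sum_{j=1}^k|L_j\cap T_{i+1}|$ for all $k\in[m]$.
   Context: $a<_Pb$: strict order; $a\sim_Pb$: incomparable or equal. A $P$-array is a filling $T$ of a Young diagram (English notation) by elements of $P$ such that each column satisfies $T(1,c)<_PT(2,c)<_P\cdots$; it is a $P$-tableau if additionally $T(r,c+1)\not<_PT(r,c)$ whenever both boxes exist. Each column is viewed as a chain of $P$. For chains $C,D$, $\mathrm{inc}_P(C,D)$ is the bipartite graph on $C\sqcup D$ with an edge $c$—$d$ ($c\in C,d\in D$) when $c\sim_Pd$; its connected components are the ladders of $(C,D)$. For $(3+1)$-free $P$ the ladders are totally ordered in the sense that for two distinct ladders every element of one is $<_P$ every element of the other; the ladder decomposition $L_m,\dots,L_1$ lists the ladders in decreasing order (so $L_1$ is the smallest). *)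

(* Defs.v *)
From HB Require Import structures.
From mathcomp Require Import all_boot all_order.
Set Implicit Arguments. Unset Strict Implicit. Unset Printing Implicit Defensive.
Import Order.TTheory.
Local Open Scope order_scope.

Section Defs.
Context {disp : Order.disp_t} {P : finPOrderType disp}.

Definition simP (a b : P) : bool := ~~ (a < b) && ~~ (b < a).

Definition three_one_free : Prop :=
  ~ exists a b c d : P, [/\ a < b, b < c & [&& simP d a, simP d b & simP d c]].

(* A filling T of a Young diagram (English notation) is given by its list of
   columns, each listed from top to bottom: T(r,c) = nth (nth [::] T c) r. *)
Definition entry (T : seq (seq P)) (r c : nat) (x0 : P) : P :=
  nth x0 (nth [::] T c) r.

Definition young_shape (T : seq (seq P)) : bool :=
  all (fun col => 0 < size col)%N T && sorted geq (map size T).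

Definition P_array (T : seq (seq P)) : bool :=
  young_shape T && all (fun col => sorted (fun x y : P => x < y) col) T.

Definition P_tableau (T : seq (seq P)) : Prop :=
  P_array T /\
  forall (c r : nat) (x0 : P), (c.+1 < size T)%N ->
    (r < size (nth [::] T c))%N -> (r < size (nth [::] T c.+1))%N ->
    ~~ (entry T r c.+1 x0 < entry T r c x0).

Section Ladders.
Variables C D : seq P.

Definition lvert := ('I_(size C) + 'I_(size D))%type.

Definition lval (v : lvert) : P :=
  match v with
  | inl i => tnth (in_tuple C) i
  | inr j => tnth (in_tuple D) j
  end.

Definition ledge : rel lvert := fun u v =>
  match u, v with
  | inl _, inr _ | inr _, inl _ => simP (lval u) (lval v)
  | _, _ => false
  end.

Definition same_ladder (u v : lvert) : bool := connect ledge u v.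

Definition ladder_le (u v : lvert) : bool :=
  same_ladder u v ||
  [forall x : lvert, forall y : lvert,
     same_ladder u x ==> same_ladder v y ==> (lval x < lval y)].

(* Ladder condition: writing the ladders L_m > ... > L_1, for each k the
   number of C-vertices in L_1 ∪ ... ∪ L_k is at least the number of
   D-vertices there; {L_1,...,L_k} is the set of ladders <= L_k. *)
Definition ladder_condition : Prop :=
  forall v : lvert,
    (#|[pred j : 'I_(size D) | ladder_le (inr j) v]|
       <= #|[pred i : 'I_(size C) | ladder_le (inl i) v]|)%N.
End Ladders.

End Defs.

(* Main.v *)
Require Import Defs.
From HB Require Import structures.
From mathcomp Require Import all_boot all_order.
Set Implicit Arguments. Unset Strict Implicit. Unset Printing Implicit Defensive.
Import Order.TTheory.
Local Open Scope order_scope.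

Section Lad.
Variables (disp : Order.disp_t) (P : finPOrderType disp) (C D : seq P).
Hypothesis sC : sorted (fun x y : P => x < y) C.
Hypothesis sD : sorted (fun x y : P => x < y) D.

Local Notation same := (@same_ladder _ P C D).
Local Notation lv := (@lval _ P C D).
Local Notation le := (@ledge _ P C D).
Local Notation ll := (@ladder_le _ P C D).

Lemma ltT : transitive (fun x y : P => x < y).
Proof. by move=> y x z; apply: lt_trans. Qed.

Lemma nth_lt s x0 i j : sorted (fun x y : P => x < y) s ->
  (i < j)%N -> (j < size s)%N -> nth x0 s i < nth x0 s j.
Proof.
move=> ss ij js; apply: (sorted_ltn_nth ltT) => //; rewrite inE //.
exact: ltn_trans ij js.
Qed.

Lemma nth_le s x0 i j : sorted (fun x y : P => x < y) s ->
  (i <= j)%N -> (j < size s)%N -> nth x0 s i <= nth x0 s j.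
Proof.
move=> ss; rewrite leq_eqVlt => /orP[/eqP->|ij] js //.
by apply/ltW/nth_lt.
Qed.

Lemma lvL x0 (i : 'I_(size C)) : lv (inl i) = nth x0 C i.
Proof. exact: tnth_nth. Qed.
Lemma lvR x0 (j : 'I_(size D)) : lv (inr j) = nth x0 D j.
Proof. exact: tnth_nth. Qed.

Lemma ledge_sym : symmetric (@ledge _ P C D).
Proof. by case=> a [b|b] //=; rewrite /simP andbC. Qed.

Lemma same_sym u v : same u v = same v u.
Proof. exact: (sym_connect_sym ledge_sym). Qed.

Lemma same_trans u v w : same u v -> same v w -> same u w.
Proof. exact: connect_trans. Qed.

Lemma ledge_sim u v : ledge u v -> simP (lv u) (lv v).
Proof. by case: u => a; case: v => b. Qed.

Lemma diff_cmp u w : ~~ same u w -> (lv u < lv w) || (lv w < lv u).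
Proof.
case: u => i; case: w => k Hs.
- have ik : i != k by apply: contraNneq Hs => ->; apply: connect0.
  have x0 : P by exact: lv (inl i).
  rewrite !(lvL x0).
  case: (ltngtP i k) => [lt|lt|eq]; last by rewrite (val_inj eq) eqxx in ik.
    by rewrite nth_lt.
  by rewrite orbC nth_lt.
- have : ~~ le (inl i) (inr k) by apply: contra Hs; apply: connect1.
  by rewrite /= /simP negb_and !negbK.
- have : ~~ le (inr i) (inl k) by apply: contra Hs; apply: connect1.
  by rewrite /= /simP negb_and !negbK.
- have jl : i != k by apply: contraNneq Hs => ->; apply: connect0.
  have x0 : P by exact: lv (inr i).
  rewrite !(lvR x0).
  case: (ltngtP i k) => [lt|lt|eq]; last by rewrite (val_inj eq) eqxx in jl.
    by rewrite nth_lt.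
  by rewrite orbC nth_lt.
Qed.

Lemma order_left u u' w : same u u' -> ~~ same u w -> lv u < lv w -> lv u' < lv w.
Proof.
move/connectP=> [p pth ->] {u'}; elim: p u pth => [|y p IH] u //= /andP[e pth] nsw lt.
have suy : same u y by apply: connect1.
have nyw : ~~ same y w by apply: contra nsw; apply: same_trans.
apply: IH => //.
have := diff_cmp nyw; case/orP => // wy.
have := ledge_sim e; rewrite /simP (lt_trans lt wy) //.
Qed.

Lemma order_right u w w' : same w w' -> ~~ same u w -> lv u < lv w -> lv u < lv w'.
Proof.
move/connectP=> [p pth ->] {w'}; elim: p w pth => [|y p IH] w //= /andP[e pth] nsw lt.
have swy : same w y by apply: connect1.
have nuy : ~~ same u y.
  apply: contra nsw => uy; apply: same_trans uy _; by rewrite same_sym.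
apply: IH => //.
have := diff_cmp nuy; case/orP => // yu.
have := ledge_sim e; rewrite /simP (lt_trans yu lt) andbF //.
Qed.

Lemma order_all u w : ~~ same u w -> lv u < lv w ->
  forall x y, same u x -> same w y -> lv x < lv y.
Proof.
move=> nuw lt x y ux wy.
have xw : lv x < lv w by apply: order_left ux nuw lt.
have nxw : ~~ same x w.
  apply: contra nuw => xw'; exact: same_trans ux xw'.
exact: order_right wy nxw xw.
Qed.

Lemma tc_lc (Hq : (size D <= size C)%N)
  (HT : forall x0 r, (r < size D)%N -> ~~ (nth x0 D r < nth x0 C r)) :
  ladder_condition C D.
Proof.
move=> v.
set f := widen_ord Hq.
have finj : injective f.
  by move=> a b H; apply: val_inj; exact: (congr1 val H).
rewrite -(card_imset _ finj); apply: subset_leq_card; apply/subsetP => z.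
case/imsetP => j; rewrite inE => Hj -> {z}; rewrite inE.
have x0 : P by exact: lv (inr j).
case sj: (same (inl (f j)) (inr j)).
- case/orP: Hj => [Hs|/forallP F]; apply/orP; [left; exact: same_trans sj Hs|right].
  apply/forallP => x; apply/forallP => y; apply/implyP => Hx; apply/implyP => Hy.
  have H1 : same (inr j) x by rewrite same_sym in sj; exact: same_trans sj Hx.
  by have := F x; move/forallP => /(_ y) /implyP /(_ H1) /implyP /(_ Hy).
- have lt : lv (inl (f j)) < lv (inr j).
    have := diff_cmp (negbT sj); case/orP => // H.
    have := HT x0 j (ltn_ord j).
    by rewrite -(lvR x0) -(lvL x0 (f j)) H.
  have OA := order_all (negbT sj) lt.
  apply/orP; right; apply/forallP => x; apply/forallP => y; apply/implyP => Hx; apply/implyP => Hy.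
  case/orP: Hj => [Hs|/forallP F].
  + apply: OA => //; exact: same_trans Hs Hy.
  + apply: (lt_trans (OA x (inr j) Hx (connect0 _ _))).
    by have := F (inr j); move/forallP => /(_ y) /implyP /(_ (connect0 _ _)) /implyP /(_ Hy).
Qed.


Definition lowerv m (z : lvert C D) : bool :=
  match z with inl a => (a < m)%N | inr b => (b <= m)%N end.

Lemma card_lt n m (A : {pred 'I_n}) :
  (forall i : 'I_n, i \in A -> (i < m)%N) -> (#|A| <= m)%N.
Proof.
move=> H; rewrite cardE -(size_map val) -[m](size_iota 0).
apply: uniq_leq_size; first by rewrite (map_inj_uniq val_inj) enum_uniq.
move=> x /mapP [i]; rewrite mem_enum => /H im ->.
by rewrite mem_iota add0n.
Qed.

Lemma card_ge n m (B : {pred 'I_n}) : (m <= n)%N ->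
  (forall i : 'I_n, (i < m)%N -> i \in B) -> (m <= #|B|)%N.
Proof.
move=> mn H; rewrite cardE -(size_map val) -[m in (m <= _)%N](size_iota 0).
apply: uniq_leq_size; first exact: iota_uniq.
move=> x; rewrite mem_iota add0n => /andP[_ xm].
have xn : (x < n)%N by exact: leq_trans xm mn.
apply/mapP; exists (Ordinal xn) => //; rewrite mem_enum; exact: H.
Qed.

Lemma lc_tc (H31 : three_one_free (P := P)) (Hq : (size D <= size C)%N)
  (LC : ladder_condition C D) x0 r :
  (r < size D)%N -> ~~ (nth x0 D r < nth x0 C r).
Proof.
move=> rD; apply/negP => Hr0.
have ex : exists r, (r < size D)%N && (nth x0 D r < nth x0 C r).
  by exists r; rewrite rD Hr0.
case: (ex_minnP ex) => m /andP[mD mlt] mmin {ex r rD Hr0}.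
have mC : (m < size C)%N by exact: leq_trans mD Hq.
have minP : forall a, (a < m)%N -> ~~ (nth x0 D a < nth x0 C a).
  move=> a am; apply/negP => H.
  have aD : (a < size D)%N by exact: ltn_trans am mD.
  by have := mmin a; rewrite aD H => /(_ isT); rewrite leqNgt am.
pose rm : 'I_(size D) := Ordinal mD.
have cross : forall p u, path le u p -> lowerv m u -> ~~ lowerv m (last u p) ->
    exists a b, [/\ (a < m)%N, (m < b)%N, (a < size C)%N, (b < size D)%N &
                    simP (nth x0 C a) (nth x0 D b)].
  elim=> [|y p IH] u /=; first by move=> _ ->.
  case/andP => e pth lu nl.
  case ly: (lowerv m y); first by apply: (IH y pth) => //; rewrite ly.
  move: e lu ly; case: u => a; case: y {pth nl IH} => b //=.
  - move=> e am; move/negbT; rewrite -ltnNge => mb.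
    exists a, b; split; [done|done|exact: ltn_ord|exact: ltn_ord|].
    by move: e; rewrite !(tnth_nth x0).
  - rewrite !(tnth_nth x0) /simP => /andP[/negP E _] am; move/negbT; rewrite -leqNgt => mb.
    apply: False_ind; apply: E.
    apply: (le_lt_trans (nth_le x0 sD am mD)).
    apply: (lt_le_trans mlt); exact: nth_le.
have key : forall i : 'I_(size C), (m <= i)%N -> ~~ same (inr rm) (inl i).
  move=> i mi; apply/negP => /connectP [p pth eq].
  have [a [b [am mb aC bD]]] : exists a b, [/\ (a < m)%N, (m < b)%N, (a < size C)%N, (b < size D)%N &
                    simP (nth x0 C a) (nth x0 D b)].
    apply: (cross p (inr rm) pth) => /=; first exact: leqnn.
    by rewrite -eq /= -leqNgt.
  rewrite /simP => /andP[nab nba].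
  have dmb : nth x0 D m < nth x0 D b by exact: nth_lt.
  have dam : nth x0 D a < nth x0 D m by exact: nth_lt.
  case: (boolP (nth x0 C a < nth x0 D m)) => h1.
    by move/negP: nab; apply; exact: lt_trans h1 dmb.
  case: (boolP (nth x0 D m < nth x0 C a)) => h2.
    by move/negP: (minP a am); apply; exact: lt_trans dam h2.
  have h3 : ~~ (nth x0 C a < nth x0 D a).
    by apply/negP => h; move/negP: h1; apply; exact: lt_trans h dam.
  apply: H31; exists (nth x0 D a), (nth x0 D m), (nth x0 D b), (nth x0 C a).
  split => //; rewrite /simP h1 h2 h3 nab nba (minP a am) //.
have := LC (inr rm).
move=> H.
have B1 : (m.+1 <= #|[pred j : 'I_(size D) | ll (inr j) (inr rm)]|)%N.
  apply: card_ge => // i im; rewrite inE.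
  case si: (same (inr i) (inr rm)); first by rewrite /ladder_le si.
  have ilt : (i < m)%N.
    rewrite ltn_neqAle -ltnS im andbT; apply/negP => /eqP iE.
    have : i = rm by apply: val_inj.
    by move=> E; move: si; rewrite E /same_ladder connect0.
  have lt : lv (inr i) < lv (inr rm) by rewrite !(lvR x0); exact: nth_lt.
  apply/orP; right; apply/forallP => x; apply/forallP => y; apply/implyP => Hx; apply/implyP => Hy.
  exact: (order_all (negbT si) lt Hx Hy).
have A1 : (#|[pred i : 'I_(size C) | ll (inl i) (inr rm)]| <= m)%N.
  apply: card_lt => i; rewrite inE; apply: contraTT; rewrite -leqNgt => mi.
  rewrite /ladder_le negb_or; apply/andP; split.
    by rewrite same_sym; exact: key.
  apply/negP => /forallP /(_ (inl i)) /forallP /(_ (inr rm)) /implyP /(_ (connect0 _ _)) /implyP /(_ (connect0 _ _)).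
  rewrite (lvL x0) (lvR x0) /= => h.
  have : nth x0 D m < nth x0 C i by apply: (lt_le_trans mlt); exact: nth_le.
  by rewrite lt_gtF.
by have := leq_trans B1 (leq_trans H A1); rewrite ltnn.
Qed.

End Lad.

Theorem mainTheorem18 (disp : Order.disp_t) (P : finPOrderType disp)
  (T : seq (seq P)) :
  three_one_free (P := P) -> P_array T ->
  (P_tableau T <->
   forall i : nat, (i.+1 < size T)%N ->
     ladder_condition (nth [::] T i) (nth [::] T i.+1)).
Proof.
move=> H31 PA.
have /andP [/andP [_ srt] allc] := PA.
have colS : forall i, (i < size T)%N -> sorted (fun x y : P => x < y) (nth [::] T i).
  by move=> i iT; exact: (allP allc) _ (mem_nth [::] iT).
have gtr : transitive (fun m n : nat => (n <= m)%N).
  by move=> y x z h1 h2; exact: leq_trans h2 h1.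
have szle : forall i, (i.+1 < size T)%N ->
    (size (nth [::] T i.+1) <= size (nth [::] T i))%N.
  move=> i iT.
  have := @sorted_ltn_nth _ geq gtr 0%N _ srt i i.+1.
  rewrite !inE size_map iT (ltn_trans (ltnSn i) iT) => /(_ isT isT (ltnSn i)).
  by rewrite (nth_map [::]) ?(nth_map [::]) // (ltn_trans (ltnSn i) iT).
split.
- case=> _ TC i iT.
  apply: (tc_lc (colS i (ltn_trans (ltnSn i) iT)) (colS i.+1 iT) (szle i iT)).
  move=> x0 r rD; apply: (TC i r x0 iT) => //.
  exact: leq_trans rD (szle i iT).
- move=> LC; split => // c r x0 cT rC rD.
  apply: (lc_tc (colS c _) (colS c.+1 cT) H31 (szle c cT) (LC c cT) x0 rD).
  exact: ltn_trans (ltnSn c) cT.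
Qed.
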